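(* Let $n$ be an even positive integer. The associated core group $\Pi^{(2)}_{L}$ of an unoriented welded link $L$ is preserved by unoriented $V^{n}$-moves.
   Context: An unoriented virtual link diagram is the image of an immersion of finitely many circles in the plane with transverse double points, each a classical crossing (with over/under information) or a virtual crossing. Welded Reidemeister moves are R1–R3, the virtual moves VR1–VR4, and the OC move (a strand passing over two strands at classical crossings may slide across a virtual crossing of those two strands); an unoriented welded link is an equivalence class of unoriented diagrams under these moves. The associated core group $\Pi^{(2)}_D$ of an unoriented virtual link diagram $D$ has one generator for each arc of $D$ (arcs run from under-crossing to under-crossing, passing through virtual crossings, which contribute no generators or relations) and one relation $yx^{-1}yz^{-1}$ for each classical crossing, where $x,z$ are the two under-arcs and $y$ is the over-arc at that crossing. It is invariant under welded Reidemeister moves, and $\Pi^{(2)}_L:=\Pi^{(2)}_D$ for a diagram $D$ of $L$. The unoriented $V^{n}$-move: inside a disk the diagram consists of two arcs $a,b$ running side by side; on one side of the move they are parallel without crossings; on the other side (same endpoints) the tangle is the $2$-braid word $(\sigma\tau)^{n}$, where $\sigma$ is a classical crossing with $b$ over $a$ and $\tau$ a virtual crossing; orientations are disregarded. The move replaces one side by the other. *)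

(* Defs.v *)
(* Combinatorial encoding of unoriented virtual
   link diagrams by signless over/under Gauss codes. *)
From mathcomp Require Import all_boot.
Set Implicit Arguments. Unset Strict Implicit. Unset Printing Implicit Defensive.

(* An event on a component: (crossing label, true = over / false = under). *)
Definition event := (nat * bool)%type.
(* A diagram: list of components, each a cyclic sequence of events read along
   the component (in an arbitrary direction; orientation is disregarded). *)
Definition gcode := seq (seq event).

Definition wf_gcode (D : gcode) : Prop :=
  forall c : nat, count_mem (c, true) (flatten D) <= 1 /\
                  count_mem (c, true) (flatten D) = count_mem (c, false) (flatten D).

(* generators: inl c = the arc starting at the under-passage of crossing c;
               inr i = the whole component i, when it has no under-passage. *)
Definition gen := (nat + nat)%type.
Definition letter := (gen * bool)%type.   (* true = inverse letter *)
Definition word := seq letter.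

Inductive wequiv (R : word -> Prop) : word -> word -> Prop :=
| we_refl w : wequiv R w w
| we_sym u v : wequiv R u v -> wequiv R v u
| we_trans u v w : wequiv R u v -> wequiv R v w -> wequiv R u w
| we_cancel u v g b : wequiv R (u ++ (g, b) :: (g, ~~ b) :: v) (u ++ v)
| we_rel u v r : R r -> wequiv R (u ++ r ++ v) (u ++ v).

Definition over_gens (P : pred gen) (w : word) : bool := all (fun l => P l.1) w.

(* group isomorphism between < P1 | R1 > and < P2 | R2 > (elements = words in
   the generators modulo wequiv, product = concatenation) *)
Definition pres_iso (P1 : pred gen) (R1 : word -> Prop)
                    (P2 : pred gen) (R2 : word -> Prop) : Prop :=
  exists phi psi : word -> word,
    (forall u, over_gens P1 u -> over_gens P2 (phi u)) /\
    (forall v, over_gens P2 v -> over_gens P1 (psi v)) /\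
    (forall u v, over_gens P1 u -> over_gens P1 v -> wequiv R1 u v ->
                 wequiv R2 (phi u) (phi v)) /\
    (forall u v, over_gens P2 u -> over_gens P2 v -> wequiv R2 u v ->
                 wequiv R1 (psi u) (psi v)) /\
    (forall u v, over_gens P1 u -> over_gens P1 v ->
                 wequiv R2 (phi (u ++ v)) (phi u ++ phi v)) /\
    (forall u v, over_gens P2 u -> over_gens P2 v ->
                 wequiv R1 (psi (u ++ v)) (psi u ++ psi v)) /\
    (forall u, over_gens P1 u -> wequiv R1 (psi (phi u)) u) /\
    (forall v, over_gens P2 v -> wequiv R2 (phi (psi v)) v).

(* the arc containing the segment of component i just after position p:
   go backwards (cyclically) from p to the first under-passage *)
Definition arc_after (D : gcode) (i p : nat) : gen :=
  let s := nth [::] D i in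
  let t := rev (take p.+1 s) ++ rev (drop p.+1 s) in
  match [seq e <- t | ~~ e.2] with
  | e :: _ => inl e.1
  | [::] => inr i
  end.

Definition is_arc (D : gcode) : pred gen := fun g =>
  match g with
  | inl c => (c, false) \in flatten D
  | inr i => (i < size D) && all (fun e : event => e.2) (nth [::] D i)
  end.

Definition is_relator (D : gcode) (r : word) : Prop :=
  exists i j i' j' c,
    [/\ i < size D /\ j < size (nth [::] D i),
        nth (0, true) (nth [::] D i) j = (c, false),
        i' < size D /\ j' < size (nth [::] D i'),
        nth (0, false) (nth [::] D i') j' = (c, true) &
        let m := size (nth [::] D i) in
        let x := arc_after D i ((j + m).-1 %% m) in
        let z := arc_after D i j in
        let y := arc_after D i' j' in
        r = [:: (y, false); (x, true); (y, false); (z, true)]].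

Definition ins (D : gcode) (i p : nat) (blk : seq event) : gcode :=
  let s := nth [::] D i in set_nth [::] D i (take p s ++ blk ++ drop p s).

(* insert X at gap (i1,p1) and Y at gap (i2,p2); in the same gap, X comes before Y *)
Definition ins2 (D : gcode) (i1 p1 : nat) (X : seq event) (i2 p2 : nat) (Y : seq event) :=
  if (i1 == i2) && (p2 < p1) then ins (ins D i1 p1 X) i2 p2 Y
  else ins (ins D i2 p2 Y) i1 p1 X.

(* D' is obtained from D by inserting the tangle (sigma tau)^n: n new crossings
   c_1..c_n, strand a passes under them and strand b over them, both in the order
   c_1..c_n along the parallel strands (each possibly read backwards along its
   component). *)
Definition vn_insert (n : nat) (D D' : gcode) : Prop :=
  exists (cs : seq nat) (ra rb : bool) (i1 p1 i2 p2 : nat),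
    [/\ size cs = n /\ uniq cs,
        (forall c b, c \in cs -> (c, b) \notin flatten D),
        i1 < size D /\ p1 <= size (nth [::] D i1),
        i2 < size D /\ p2 <= size (nth [::] D i2) &
        let A0 := [seq (c, false) | c <- cs] in
        let B0 := [seq (c, true) | c <- cs] in
        let A := if ra then rev A0 else A0 in
        let B := if rb then rev B0 else B0 in
        D' = ins2 D i1 p1 A i2 p2 B \/ D' = ins2 D i2 p2 B i1 p1 A].

Definition vn_move (n : nat) (D D' : gcode) : Prop := vn_insert n D D' \/ vn_insert n D' D.

(* Main.v *)
Require Import Defs.
From mathcomp Require Import all_boot zify.
Set Implicit Arguments. Unset Strict Implicit. Unset Printing Implicit Defensive.

Definition winv (w : word) : word := rev (map (fun l : letter => (l.1, ~~ l.2)) w).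

Lemma winv_cat u v : winv (u ++ v) = winv v ++ winv u.
Proof. by rewrite /winv map_cat rev_cat. Qed.

Lemma winvK w : winv (winv w) = w.
Proof.
rewrite /winv map_rev revK -map_comp.
by elim: w => [|[g b] w IH] //=; rewrite negbK IH.
Qed.

Lemma we_ctx R u v p q : wequiv R u v -> wequiv R (p ++ u ++ q) (p ++ v ++ q).
Proof.
elim=> {u v} [w|u v _ IH|u v w _ IH1 _ IH2|u v g b|u v r Hr].
- exact: we_refl.
- exact: we_sym.
- exact: we_trans IH2.
- have := @we_cancel R (p ++ u) (v ++ q) g b.
  by rewrite -!catA.
- have -> : p ++ (u ++ r ++ v) ++ q = (p ++ u) ++ r ++ (v ++ q) by rewrite -!catA.
  have -> : p ++ (u ++ v) ++ q = (p ++ u) ++ (v ++ q) by rewrite -!catA.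
  exact: we_rel.
Qed.

Lemma we_cat R u u' v v' : wequiv R u u' -> wequiv R v v' -> wequiv R (u ++ v) (u' ++ v').
Proof.
move=> H1 H2; apply: (@we_trans _ _ (u' ++ v)).
  by have := we_ctx [::] v H1; rewrite /= .
by have := we_ctx u' [::] H2; rewrite !cats0.
Qed.

Lemma we_winvr R w : wequiv R (w ++ winv w) [::].
Proof.
elim: w => [|[g b] w IH] /=; first exact: we_refl.
rewrite /winv /= rev_cons -cats1 -/(winv w).
apply: (@we_trans _ _ ([:: (g, b)] ++ [:: (g, ~~ b)])).
  have := we_ctx [:: (g, b)] [:: (g, ~~ b)] IH.
  by rewrite /= -!catA.
by have := @we_cancel R [::] [::] g b.
Qed.

Lemma we_winvl R w : wequiv R (winv w ++ w) [::].
Proof. by have := we_winvr R (winv w); rewrite winvK. Qed.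

Lemma we_inv R u v : wequiv R u v -> wequiv R (winv u) (winv v).
Proof.
move=> H.
apply: (@we_trans _ _ (winv u ++ (v ++ winv v))).
  have := we_ctx (winv u) [::] (we_sym (we_winvr R v)); by rewrite !cats0.
apply: (@we_trans _ _ ((winv u ++ u) ++ winv v)).
  rewrite -catA; exact: (we_ctx (winv u) (winv v) (we_sym H)).
have := we_ctx [::] (winv v) (we_winvl R u); by [].
Qed.

Lemma we_rel0 R r : R r -> wequiv R r [::].
Proof. by move=> Hr; have := @we_rel R [::] [::] r Hr; rewrite cats0. Qed.

Definition lw (h : gen -> word) (l : letter) : word := if l.2 then winv (h l.1) else h l.1.
Definition subst (h : gen -> word) (w : word) : word := flatten (map (lw h) w).

Lemma subst_cat h u v : subst h (u ++ v) = subst h u ++ subst h v.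
Proof. by rewrite /subst map_cat flatten_cat. Qed.

Lemma subst_winv h w : subst h (winv w) = winv (subst h w).
Proof.
elim: w => [|[g b] w IH] //=.
rewrite /winv /= rev_cons -cats1 -/(winv w) subst_cat IH.
  rewrite /subst /= cats0 /lw /= -/(winv _) winv_cat.
  by case: b => //=; rewrite winvK.
Qed.

Lemma subst_we R1 R2 h :
  (forall r, R1 r -> wequiv R2 (subst h r) [::]) ->
  forall u v, wequiv R1 u v -> wequiv R2 (subst h u) (subst h v).
Proof.
move=> hR u v; elim=> {u v} [w|u v _ IH|u v w _ IH1 _ IH2|u v g b|u v r Hr].
- exact: we_refl.
- exact: we_sym.
- exact: we_trans IH2.
- rewrite !subst_cat; apply: we_cat; first exact: we_refl.
  rewrite /subst /= /lw /= -/(subst h v) catA; case: b => /=.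
    by have := we_ctx [::] (subst h v) (we_winvl R2 (h g)).
  by have := we_ctx [::] (subst h v) (we_winvr R2 (h g)).
- rewrite !subst_cat; apply: we_cat; first exact: we_refl.
  by have := we_ctx [::] (subst h v) (hR r Hr).
Qed.

Lemma over_gens_cat P u v : over_gens P (u ++ v) = over_gens P u && over_gens P v.
Proof. by rewrite /over_gens all_cat. Qed.

Lemma over_gens_winv P w : over_gens P (winv w) = over_gens P w.
Proof. by rewrite /over_gens /winv all_rev all_map. Qed.

Lemma subst_over (P1 P2 : pred gen) h :
  (forall g, P1 g -> over_gens P2 (h g)) ->
  forall u, over_gens P1 u -> over_gens P2 (subst h u).
Proof.
move=> hP; elim=> [|[g b] w IH] //= /andP[Hg Hw].
rewrite /subst /= over_gens_cat -/(subst h w) IH // andbT /lw /=.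
by case: b; rewrite ?over_gens_winv hP.
Qed.

Lemma subst_comp R (P : pred gen) h h' :
  (forall g, P g -> wequiv R (subst h' (h g)) [:: (g, false)]) ->
  forall u, over_gens P u -> wequiv R (subst h' (subst h u)) u.
Proof.
move=> hc; elim=> [|[g b] w IH] /=; first by move=> _; exact: we_refl.
move=> /andP[Hg Hw].
rewrite /subst /= -/(subst h w) -/(subst h' _) subst_cat.
apply: (@we_cat R _ [:: (g, b)] _ w); last exact: IH.
rewrite /lw /=; case: b; last exact: hc.
rewrite subst_winv; have := we_inv (hc g Hg); by rewrite /winv.
Qed.

Lemma pres_iso_sym (P1 : pred gen) R1 (P2 : pred gen) R2 : pres_iso P1 R1 P2 R2 -> pres_iso P2 R2 P1 R1.
Proof.
case=> phi [psi [h1 [h2 [h3 [h4 [h5 [h6 [h7 h8]]]]]]]].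
by exists psi, phi.
Qed.

Lemma pres_iso_subst (P1 : pred gen) R1 (P2 : pred gen) R2 h h' :
  (forall g, P1 g -> over_gens P2 (h g)) ->
  (forall g, P2 g -> over_gens P1 (h' g)) ->
  (forall r, R1 r -> wequiv R2 (subst h r) [::]) ->
  (forall r, R2 r -> wequiv R1 (subst h' r) [::]) ->
  (forall g, P1 g -> wequiv R1 (subst h' (h g)) [:: (g, false)]) ->
  (forall g, P2 g -> wequiv R2 (subst h (h' g)) [:: (g, false)]) ->
  pres_iso P1 R1 P2 R2.
Proof.
move=> o1 o2 r1 r2 c1 c2.
exists (subst h), (subst h'); split; first exact: subst_over.
split; first exact: subst_over.
split; first by move=> u v _ _; apply: subst_we.
split; first by move=> u v _ _; apply: subst_we.
split; first by move=> u v _ _; rewrite subst_cat; exact: we_refl.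
split; first by move=> u v _ _; rewrite subst_cat; exact: we_refl.
split; by [apply: subst_comp | apply: subst_comp].
Qed.

Lemma fg_solve R w g : wequiv R (w ++ [:: (g, true)]) [::] -> wequiv R [:: (g, false)] w.
Proof.
move=> H.
apply: (@we_trans _ _ ((w ++ [:: (g, true)]) ++ [:: (g, false)])).
  by apply: we_sym; have := we_ctx [::] [:: (g, false)] H.
rewrite -catA /=.
by have := @we_cancel R w [::] g true; rewrite cats0.
Qed.

Lemma we_letinv R a b : wequiv R [:: (a, false)] [:: (b, false)] ->
  wequiv R [:: (a, true)] [:: (b, true)].
Proof. by move/(we_inv). Qed.

Lemma we3 R a a' b b' : wequiv R [:: (a, false)] [:: (a', false)] ->
  wequiv R [:: (b, false)] [:: (b', false)] ->
  wequiv R [:: (a, false); (b, true); (a, false)] [:: (a', false); (b', true); (a', false)].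
Proof.
move=> Ha Hb.
have -> : [:: (a, false); (b, true); (a, false)] = [:: (a, false)] ++ [:: (b, true)] ++ [:: (a, false)] by [].
have -> : [:: (a', false); (b', true); (a', false)] = [:: (a', false)] ++ [:: (b', true)] ++ [:: (a', false)] by [].
by apply: we_cat => //; apply: we_cat => //; apply: we_letinv.
Qed.

Lemma we4 R a a' b b' c c' : wequiv R [:: (a, false)] [:: (a', false)] ->
  wequiv R [:: (b, false)] [:: (b', false)] -> wequiv R [:: (c, false)] [:: (c', false)] ->
  wequiv R [:: (a, false); (b, true); (a, false); (c, true)]
           [:: (a', false); (b', true); (a', false); (c', true)].
Proof.
move=> Ha Hb Hc.
have -> : [:: (a, false); (b, true); (a, false); (c, true)] =
  [:: (a, false); (b, true); (a, false)] ++ [:: (c, true)] by [].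
have -> : [:: (a', false); (b', true); (a', false); (c', true)] =
  [:: (a', false); (b', true); (a', false)] ++ [:: (c', true)] by [].
by apply: we_cat; [apply: we3 | apply: we_letinv].
Qed.

Lemma fg1 R a b :
  wequiv R [:: (b, false); (a, true); (b, false); (b, true); (a, false); (b, true)] [::].
Proof.
apply: (we_trans (@we_cancel R [:: (b, false); (a, true)] [:: (a, false); (b, true)] b false)).
apply: (we_trans (@we_cancel R [:: (b, false)] [:: (b, true)] a true)).
exact: (@we_cancel R [::] [::] b false).
Qed.

Lemma fg2 R a b :
  wequiv R [:: (b, false); (b, true); (a, false); (b, true); (b, false); (a, true)] [::].
Proof.
apply: (we_trans (@we_cancel R [::] [:: (a, false); (b, true); (b, false); (a, true)] b false)).
apply: (we_trans (@we_cancel R [:: (a, false)] [:: (a, true)] b true)).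
exact: (@we_cancel R [::] [::] a false).
Qed.

Lemma fg3 R a b :
  wequiv R [:: (a, false); (a, true); (b, false); (a, true); (a, false)] [:: (b, false)].
Proof.
apply: (we_trans (@we_cancel R [::] [:: (b, false); (a, true); (a, false)] a false)).
exact: (@we_cancel R [:: (b, false)] [::] a true).
Qed.

Definition opt (o : option nat) (i : nat) : gen := if o is Some c then inl c else inr i.
Definition fu (t : seq event) : option nat :=
  if [seq e <- t | ~~ e.2] is e :: _ then Some e.1 else None.
Definition ga (s : seq event) (i g : nat) : gen :=
  opt (fu (rev (take g s) ++ rev (drop g s))) i.

Lemma arc_afterE D i p : arc_after D i p = ga (nth [::] D i) i p.+1.
Proof. by rewrite /arc_after /ga /fu /opt; case: filter. Qed.

Lemma fu_cat u v : fu (u ++ v) = if fu u is Some c then Some c else fu v.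
Proof. by rewrite /fu filter_cat; case: filter. Qed.

Lemma fu_cons e u : fu (e :: u) = if e.2 then fu u else Some e.1.
Proof. by rewrite /fu /=; case: e => c []. Qed.

Lemma fuN t : fu t = None -> all (fun e : event => e.2) t.
Proof. by elim: t => [|[c b] t IH] //; rewrite fu_cons /=; case: b. Qed.

Lemma fuNo t : all (fun e : event => e.2) t -> fu t = None.
Proof. by elim: t => [|[c b] t IH] //; rewrite fu_cons /=; case: b. Qed.

Lemma fuS t c : fu t = Some c -> (c, false) \in t.
Proof.
elim: t => [|[c' b] t IH] //; rewrite fu_cons /=; case: b => [/IH|[<-]].
  by rewrite in_cons => ->; rewrite orbT.
by rewrite in_cons eqxx.
Qed.

Lemma ga_step s i g : g < size s ->
  ga s i g.+1 = if (nth (0, true) s g).2 then ga s i g else inl (nth (0, true) s g).1.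
Proof.
move=> Hg; rewrite /ga (take_nth (0, true) Hg) (drop_nth (0, true) Hg).
rewrite rev_rcons rev_cons /=.
set e := nth (0, true) s g; set u := rev (take g s); set v := rev (drop g.+1 s).
rewrite fu_cons; case: ifP => He //.
rewrite -cats1 catA [in RHS]fu_cat; case: (fu (u ++ v)) => //.
by rewrite fu_cons He.
Qed.

Lemma ga_size s i : ga s i (size s) = ga s i 0.
Proof. by rewrite /ga take_size drop_size take0 drop0 /= cats0. Qed.

Lemma ga_inr s i g j : ga s i g = inr j -> j = i /\ all (fun e : event => e.2) s.
Proof.
rewrite /ga /opt; case E: fu => [c|] // [<-]; split => //.
by have := fuN E; rewrite all_cat !all_rev -all_cat cat_take_drop.
Qed.

Lemma ga_arc D i g : i < size D -> is_arc D (ga (nth [::] D i) i g).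
Proof.
move=> Hi; rewrite /ga /opt; case E: fu => [c|] /=.
  have := fuS E; rewrite mem_cat !mem_rev => H.
  apply/flattenP; exists (nth [::] D i); first exact: mem_nth.
  by case/orP: H => /[dup] H; [move/mem_take | move/mem_drop].
by rewrite Hi /=; have := fuN E; rewrite all_cat !all_rev -all_cat cat_take_drop.
Qed.

Lemma ga_prev s i j : j < size s ->
  ga s i ((j + size s).-1 %% size s).+1 = ga s i j.
Proof.
move=> Hj; case: j Hj => [|j] Hj.
  rewrite add0n modn_small; last by lia.
  by rewrite prednK ?ga_size //; lia.
rewrite addSn /= modnDr modn_small //; lia.
Qed.

Definition crel (D : gcode) (i j i' j' c : nat) : word :=
  [:: (ga (nth [::] D i') i' j'.+1, false); (ga (nth [::] D i) i j, true);
      (ga (nth [::] D i') i' j'.+1, false); (inl c, true)].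

Definition relpos (D : gcode) (i j i' j' c : nat) : Prop :=
  [/\ i < size D, j < size (nth [::] D i), nth (0, true) (nth [::] D i) j = (c, false),
      i' < size D /\ j' < size (nth [::] D i') & nth (0, true) (nth [::] D i') j' = (c, true)].

Lemma relatorP D r : is_relator D r <->
  exists i j i' j' c, relpos D i j i' j' c /\ r = crel D i j i' j' c.
Proof.
split.
  case=> i [j [i' [j' [c [[Hi Hj] Hu [Hi' Hj'] Ho Hr]]]]].
  exists i, j, i', j', c; split.
    by split => //; rewrite (set_nth_default (0, false)).
  rewrite /= in Hr; rewrite Hr /crel !arc_afterE ga_prev // (ga_step i Hj).
  by rewrite Hu.
case=> i [j [i' [j' [c [[Hi Hj Hu [Hi' Hj'] Ho] ->]]]]].
exists i, j, i', j', c; split => //.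
  by rewrite (set_nth_default (0, true)).
by rewrite /= /crel !arc_afterE ga_prev // (ga_step i Hj) Hu.
Qed.

Definition insq (s : seq event) (q : nat) (X : seq event) := take q s ++ X ++ drop q s.

Definition rho (X : seq event) (a new old : gen) :=
  new = old \/ exists c, fu (rev X) = Some c /\ new = inl c /\ old = a.

Lemma ga_cat a b i : ga (a ++ b) i (size a) = opt (fu (rev a ++ rev b)) i.
Proof. by rewrite /ga take_size_cat // drop_size_cat. Qed.

Lemma fu_cat_None u v : fu u = None -> fu (u ++ v) = fu v.
Proof. by move=> H; rewrite fu_cat H. Qed.

Lemma fu_cat_Some u v c : fu u = Some c -> fu (u ++ v) = Some c.
Proof. by move=> H; rewrite fu_cat H. Qed.

Lemma GLuv u w X v i :
  rho X (ga ((u ++ w) ++ v) i (size (u ++ w)))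
        (ga (u ++ w ++ X ++ v) i (size u)) (ga (u ++ w ++ v) i (size u)) /\
  (w = [::] -> ga (u ++ w ++ X ++ v) i (size u) = ga (u ++ w ++ v) i (size u) \/
     exists c, fu (rev X) = Some c /\ ga (u ++ w ++ X ++ v) i (size u) = inl c /\
               ga (u ++ w ++ v) i (size u) = inr i).
Proof.
rewrite !ga_cat !rev_cat -!catA.
case EA: (fu (rev u ++ rev v)) => [c|].
  have E1 := fu_cat_Some (rev X ++ rev w) EA.
  have E2 := fu_cat_Some (rev w) EA.
  rewrite -!catA in E1 E2; rewrite E1 E2; split; first by left.
  by left.
have F : forall Y, fu (rev u ++ rev v ++ Y) = fu Y by move=> Y; rewrite catA fu_cat_None.
rewrite !F.
case EX: (fu (rev X)) => [c|]; last first.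
  rewrite (fu_cat_None (rev w) EX); split; first by left. by left.
rewrite (fu_cat_Some (rev w) EX).
split.
  right; exists c; split => //; split => //.
  by case Ew: (fu (rev w)) => [d|]; [rewrite (fu_cat_Some _ Ew) | rewrite (fu_cat_None _ Ew) EA].
move=> -> /=; right; exists c; split => //; split => //.
Qed.

Lemma GRuv u w X v i :
  rho X (ga (u ++ w ++ v) i (size u))
        (ga (u ++ X ++ w ++ v) i (size u + size X + size w))
        (ga (u ++ w ++ v) i (size u + size w)).
Proof.
have -> : u ++ X ++ w ++ v = (u ++ X ++ w) ++ v by rewrite -!catA.
have -> : size u + size X + size w = size (u ++ X ++ w) by rewrite !size_cat addnA.
have -> : ga (u ++ w ++ v) i (size u + size w) = ga ((u ++ w) ++ v) i (size (u ++ w))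
  by rewrite -catA size_cat.
rewrite !ga_cat !rev_cat -!catA.
case Ew: (fu (rev w)) => [c|].
  by left; rewrite !(fu_cat_Some _ Ew).
rewrite !(fu_cat_None _ Ew).
case EX: (fu (rev X)) => [c|]; last by left; rewrite (fu_cat_None _ EX).
right; exists c; split => //; rewrite (fu_cat_Some _ EX); split => //.
rewrite catA [in RHS]fu_cat.
by case: (fu (rev u ++ rev v)) => //; rewrite Ew.
Qed.

Lemma split3 (s : seq event) g q : g <= q -> q <= size s ->
  exists u w v, [/\ s = u ++ w ++ v, size u = g & size (u ++ w) = q].
Proof.
move=> Hgq Hq; exists (take g s), (drop g (take q s)), (drop q s); split.
- by rewrite catA -{1}(take_takel s Hgq) cat_take_drop cat_take_drop.
- by rewrite size_takel //; lia.
- by rewrite -{1}(take_takel s Hgq) cat_take_drop size_takel.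
Qed.

Lemma size_insq s q X : q <= size s -> size (insq s q X) = size s + size X.
Proof. by move=> Hq; rewrite /insq !size_cat size_takel // size_drop; lia. Qed.

Lemma GL s q X g i : g <= q -> q <= size s ->
  rho X (ga s i q) (ga (insq s q X) i g) (ga s i g).
Proof.
move=> Hgq Hq; case: (split3 Hgq Hq) => u [w [v [Es Hu Huw]]].
have -> : insq s q X = u ++ w ++ X ++ v.
  by rewrite /insq Es -Huw (catA u w v) take_size_cat // drop_size_cat // -!catA.
rewrite Es -Hu -Huw catA; have := (GLuv u w X v i).1; by rewrite -!catA.
Qed.

Lemma GHead s q X i : q <= size s ->
  ga (insq s q X) i q = ga s i q \/
  exists c, fu (rev X) = Some c /\ ga (insq s q X) i q = inl c /\ ga s i q = inr i.
Proof.
move=> Hq; case: (split3 (leqnn q) Hq) => u [w [v [Es Hu Huw]]].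
have w0 : w = [::] by apply/nilP; rewrite /nilp; move: Huw; rewrite size_cat; lia.
subst w; rewrite cats0 in Huw; subst q; rewrite /= in Es; subst s.
have -> : insq (u ++ v) (size u) X = u ++ [::] ++ X ++ v.
  by rewrite /insq take_size_cat // drop_size_cat.
exact: (GLuv u [::] X v i).2.
Qed.

Lemma GR s q X g i : q <= g -> g <= size s ->
  rho X (ga s i q) (ga (insq s q X) i (g + size X)) (ga s i g).
Proof.
move=> Hqg Hg; case: (split3 Hqg Hg) => u [w [v [Es Hu Huw]]].
have -> : insq s q X = u ++ X ++ w ++ v.
  by rewrite /insq Es -Hu take_size_cat // drop_size_cat.
have -> : g + size X = size u + size X + size w by move: Huw; rewrite size_cat; lia.
rewrite Es -Hu; have -> : g = size u + size w by move: Huw; rewrite size_cat; lia.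
exact: GRuv.
Qed.

Definition pos (q : nat) (X : seq event) (j : nat) := if j < q then j else j + size X.

Lemma nth_insq s q X J d : q <= size s ->
  nth d (insq s q X) J =
  if J < q then nth d s J else if J < q + size X then nth d X (J - q)
  else nth d s (J - size X).
Proof.
move=> Hq; rewrite /insq nth_cat size_takel //.
case: ifP => HJ; first by rewrite nth_take.
rewrite nth_cat; case: ifP => HJ2; case: ifP => HJ3 //; try lia.
rewrite nth_drop; congr nth; lia.
Qed.

Lemma ins_old s q X j i : q <= size s -> j < size s ->
  [/\ pos q X j < size (insq s q X),
      nth (0, true) (insq s q X) (pos q X j) = nth (0, true) s j,
      rho X (ga s i q) (ga (insq s q X) i (pos q X j)) (ga s i j) &
      rho X (ga s i q) (ga (insq s q X) i (pos q X j).+1) (ga s i j.+1)].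
Proof.
move=> Hq Hj; rewrite /pos; case: ifP => Hjq.
  split.
  - rewrite size_insq //; lia.
  - by rewrite nth_insq // Hjq.
  - apply: GL => //; lia.
  - apply: GL => //; lia.
split.
- rewrite size_insq //; lia.
- rewrite nth_insq // ifF; last lia. rewrite ifF; last lia. congr nth; lia.
- apply: GR => //; lia.
- rewrite -addSn; apply: GR => //; lia.
Qed.

Lemma ins_new s q X k d : q <= size s -> k < size X ->
  q + k < size (insq s q X) /\ nth d (insq s q X) (q + k) = nth d X k.
Proof.
move=> Hq Hk; split; first by rewrite size_insq //; lia.
rewrite nth_insq // ifF; last lia. rewrite ifT; last lia. congr nth; lia.
Qed.

Lemma ins_cover s q X J : q <= size s -> J < size (insq s q X) ->
  (exists2 j, j < size s & J = pos q X j) \/ (exists2 k, k < size X & J = q + k).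
Proof.
move=> Hq; rewrite size_insq // => HJ.
case: (ltnP J q) => H1.
  by left; exists J => //; [lia | rewrite /pos H1].
case: (ltnP J (q + size X)) => H2.
  by right; exists (J - q); lia.
left; exists (J - size X); first lia.
rewrite /pos ifF; lia.
Qed.

Lemma nth_ins D i0 q X i : i0 < size D ->
  nth [::] (ins D i0 q X) i = if i == i0 then insq (nth [::] D i0) q X else nth [::] D i.
Proof. by move=> Hi; rewrite /ins nth_set_nth /=. Qed.

Lemma size_ins D i0 q X : i0 < size D -> size (ins D i0 q X) = size D.
Proof. by move=> Hi; rewrite /ins size_set_nth; lia. Qed.

Definition gpos (i0 q : nat) (X : seq event) (i j : nat) := if i == i0 then pos q X j else j.

Lemma gins_old D i0 q X i j : i0 < size D -> q <= size (nth [::] D i0) ->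
  j < size (nth [::] D i) ->
  let D1 := ins D i0 q X in let J := gpos i0 q X i j in
  [/\ J < size (nth [::] D1 i),
      nth (0, true) (nth [::] D1 i) J = nth (0, true) (nth [::] D i) j,
      rho X (ga (nth [::] D i0) i0 q) (ga (nth [::] D1 i) i J) (ga (nth [::] D i) i j) &
      rho X (ga (nth [::] D i0) i0 q) (ga (nth [::] D1 i) i J.+1) (ga (nth [::] D i) i j.+1)].
Proof.
move=> Hi0 Hq Hj /=; rewrite nth_ins // /gpos.
move: Hj; case: (eqVneq i i0) => [->|Hne] Hj; first exact: ins_old.
by split => //; left.
Qed.

Lemma gins_cover D i0 q X i J : i0 < size D -> q <= size (nth [::] D i0) ->
  J < size (nth [::] (ins D i0 q X) i) ->
  (exists2 j, j < size (nth [::] D i) & J = gpos i0 q X i j) \/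
  (i = i0 /\ exists2 k, k < size X & J = q + k).
Proof.
move=> Hi0 Hq; rewrite nth_ins // /gpos; case: (eqVneq i i0) => [->|_] HJ.
  case: (ins_cover Hq HJ) => [[j Hj ->]|[k Hk ->]]; first by left; exists j.
  by right; split => //; exists k.
by left; exists J.
Qed.

Lemma gins_new D i0 q X k d : i0 < size D -> q <= size (nth [::] D i0) -> k < size X ->
  q + k < size (nth [::] (ins D i0 q X) i0) /\
  nth d (nth [::] (ins D i0 q X) i0) (q + k) = nth d X k.
Proof. by move=> Hi0 Hq Hk; rewrite nth_ins // eqxx; apply: ins_new. Qed.

Lemma mem_flat D x : x \in flatten D ->
  exists i j, [/\ i < size D, j < size (nth [::] D i) & nth (0, true) (nth [::] D i) j = x].
Proof.
case/flattenP => s Hs Hx.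
exists (index s D), (index x s); rewrite index_mem Hs nth_index // index_mem Hx nth_index //.
Qed.

Lemma flat_mem D i j : i < size D -> j < size (nth [::] D i) ->
  nth (0, true) (nth [::] D i) j \in flatten D.
Proof. move=> Hi Hj; apply/flattenP; exists (nth [::] D i); [exact: mem_nth | exact: mem_nth]. Qed.

Lemma insq_comm s p1 p2 A B : p2 <= p1 -> p1 <= size s ->
  insq (insq s p1 A) p2 B = insq (insq s p2 B) (p1 + size B) A.
Proof.
move=> H21 H1.
case: (split3 H21 H1) => u [w [v [Es Hu Huw]]].
rewrite Es /insq -Huw -Hu.
have E1 : take (size (u ++ w)) (u ++ w ++ v) = u ++ w by rewrite catA take_size_cat.
have E2 : drop (size (u ++ w)) (u ++ w ++ v) = v by rewrite catA drop_size_cat.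
have E3 : take (size u) (u ++ w ++ v) = u by rewrite take_size_cat.
have E4 : drop (size u) (u ++ w ++ v) = w ++ v by rewrite drop_size_cat.
rewrite E1 E2 E3 E4 -catA take_size_cat // drop_size_cat //.
have E5 : u ++ B ++ w ++ v = (u ++ B ++ w) ++ v by rewrite -!catA.
have E6 : size (u ++ w) + size B = size (u ++ B ++ w) by rewrite !size_cat; lia.
by rewrite E5 E6 take_size_cat // drop_size_cat // -!catA.
Qed.

Lemma ins_comm D i1 p1 A i2 p2 B : i1 < size D -> i2 < size D ->
  (i1 != i2) || (p2 <= p1) -> p1 <= size (nth [::] D i1) ->
  ins (ins D i1 p1 A) i2 p2 B =
  ins (ins D i2 p2 B) i1 (if i1 == i2 then p1 + size B else p1) A.
Proof.
move=> H1 H2 Hc Hp1.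
apply: (@eq_from_nth _ [::]); first by rewrite !size_ins.
move=> i _; rewrite !nth_ins ?size_ins //.
case: (eqVneq i1 i2) Hc => [<-|Hne] /= Hc.
  by case: (eqVneq i i1) => //= _; exact: insq_comm.
case: (eqVneq i i2) => [->|Hi2]; case: (eqVneq i i1) => [Hi1|Hi1] //.
all: by rewrite eq_sym (negbTE Hne).
Qed.

Lemma rhoB (X : seq event) a nw od : all (fun e : event => e.2) X -> rho X a nw od -> nw = od.
Proof.
move=> HX [//|[c [Hc _]]].
by rewrite fuNo in Hc; rewrite // all_rev.
Qed.

Lemma ga_overs_run (s : seq event) i P len : P + len <= size s ->
  (forall k, k < len -> (nth (0, true) s (P + k)).2) ->
  forall k, k <= len -> ga s i (P + k) = ga s i P.
Proof.
move=> Hs Ho; elim=> [|k IH] Hk; first by rewrite addn0.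
rewrite addnS ga_step; last lia.
by rewrite Ho ?IH //; lia.
Qed.

Section Main.
Variables (D : gcode) (cs : seq nat) (ra rb : bool) (i1 i2 p2 q : nat).
Definition L := if ra then rev cs else cs.
Definition A := if ra then rev [seq (c, false) | c <- cs] else [seq (c, false) | c <- cs].
Definition B := if rb then rev [seq (c, true) | c <- cs] else [seq (c, true) | c <- cs].
Definition Dmid := ins D i2 p2 B.
Definition Dfin := ins Dmid i1 q A.
Hypotheses (Hn0 : 0 < size cs) (Hev : ~~ odd (size cs)) (Hu : uniq cs)
  (Hfr : forall c b, c \in cs -> (c, b) \notin flatten D)
  (Hi1 : i1 < size D) (Hi2 : i2 < size D) (Hp2 : p2 <= size (nth [::] D i2))
  (Hq : q <= size (nth [::] Dmid i1))
  (Hct : [|| i1 != i2, q <= p2 | p2 + size cs <= q]).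

Notation n := (size cs).
Notation s i := (nth [::] D i).
Notation s1 i := (nth [::] Dmid i).
Notation s' i := (nth [::] Dfin i).
Definition alpha := ga (s1 i1) i1 q.
Definition beta := ga (s i2) i2 p2.
Definition tl := nth 0 L n.-1.
Definition head' := ga (s' i1) i1 q.
Definition xm m := if m is m'.+1 then inl (nth 0 L m') else head'.
Definition PB := gpos i1 q A i2 p2.
Definition y' := ga (s' i2) i2 PB.

Lemma AE : A = [seq (c, false) | c <- L].
Proof. by rewrite /A /L; case: ra; rewrite ?map_rev. Qed.
Lemma size_L : size L = n. Proof. by rewrite /L; case: ra; rewrite ?size_rev. Qed.
Lemma size_A : size A = n. Proof. by rewrite AE size_map size_L. Qed.
Lemma size_B : size B = n. Proof. by rewrite /B; case: rb; rewrite ?size_rev size_map. Qed.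
Lemma uniq_L : uniq L. Proof. by rewrite /L; case: ra; rewrite ?rev_uniq. Qed.
Lemma mem_L c : (c \in L) = (c \in cs). Proof. by rewrite /L; case: ra; rewrite ?mem_rev. Qed.
Lemma nth_A m : m < n -> nth (0, true) A m = (nth 0 L m, false).
Proof. by move=> Hm; rewrite AE (nth_map 0) // size_L. Qed.
Lemma B_over : all (fun e : event => e.2) B.
Proof. by rewrite /B; case: rb; rewrite ?all_rev all_map; apply/allP. Qed.
Lemma nth_B_over k : (nth (0, true) B k).2.
Proof.
case: (ltnP k (size B)) => Hk; last by rewrite nth_default.
by have := all_nthP (0, true) B_over; apply.
Qed.
Lemma nth_B_cs k c : k < n -> nth (0, true) B k = (c, true) -> c \in cs.
Proof.
move=> Hk HB; have : (c, true) \in B by rewrite -HB mem_nth // size_B.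
rewrite /B; case: rb; rewrite ?mem_rev => /mapP [c' Hc' [->]] //.
Qed.
Lemma B_cs c : c \in cs -> exists2 k, k < n & nth (0, true) B k = (c, true).
Proof.
move=> Hc; have HB : (c, true) \in B.
  by rewrite /B; case: rb; rewrite ?mem_rev; apply/mapP; exists c.
by exists (index (c, true) B); [rewrite -size_B index_mem | rewrite nth_index].
Qed.
Lemma fu_A : fu (rev A) = Some tl.
Proof.
have : 0 < size L by rewrite size_L.
rewrite AE -map_rev /tl -size_L nth_last.
case/lastP: L => [//|l c] _.
by rewrite rev_rcons last_rcons /= fu_cons.
Qed.

Lemma size_D1 : size Dmid = size D. Proof. exact: size_ins. Qed.
Lemma Hi1' : i1 < size Dmid. Proof. by rewrite size_D1. Qed.
Lemma Hi2' : i2 < size Dmid. Proof. by rewrite size_D1. Qed.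
Lemma size_D' : size Dfin = size D. Proof. by rewrite /Dfin size_ins size_D1 // Hi1'. Qed.

Lemma Fa : forall m, m < n ->
  [/\ q + m < size (s' i1), nth (0, true) (s' i1) (q + m) = (nth 0 L m, false),
      ga (s' i1) i1 (q + m) = xm m & ga (s' i1) i1 (q + m).+1 = inl (nth 0 L m)].
Proof.
have G : forall m, m < n -> q + m < size (s' i1) /\
   nth (0, true) (s' i1) (q + m) = (nth 0 L m, false).
  move=> m Hm; have HmA : m < size A by rewrite size_A.
  have [H1 H2] := gins_new (0, true) Hi1' Hq HmA.
  by rewrite -/Dfin nth_A // in H2.
move=> m Hm; have [H1 H2] := G m Hm.
split => //; last by rewrite ga_step // H2.
case: m Hm H1 H2 => [|m] Hm H1 H2; first by rewrite addn0.
rewrite addnS ga_step; last lia.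
by have [_ ->] := G m (ltnW Hm).
Qed.

Lemma s1E i : s1 i = if i == i2 then insq (s i2) p2 B else s i.
Proof. exact: nth_ins. Qed.

Lemma size_s1 : size (s1 i2) = size (s i2) + n.
Proof. by rewrite s1E eqxx size_insq // size_B. Qed.

Lemma alpha_old : exists g, alpha = ga (s i1) i1 g.
Proof.
rewrite /alpha s1E; case: (eqVneq i1 i2) => [E|Ne]; last by exists q.
subst i1; move: Hct Hq; rewrite eqxx /= s1E eqxx size_insq // size_B => Hc Hq'.
case/orP: Hc => Hc.
  exists q; have := GL B i2 Hc Hp2; exact: rhoB B_over.
have H1 : p2 <= q - n by lia.
have H2 : q - n <= size (s i2) by lia.
exists (q - n); have := GR B i2 H1 H2.
rewrite size_B subnK; last lia.
exact: rhoB B_over.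
Qed.

Lemma arc_notnew c : is_arc D (inl c) -> c \notin cs.
Proof. by move=> /= H; apply/negP => Hc; move: (Hfr false Hc); rewrite H. Qed.

Lemma alpha_arc : is_arc D alpha.
Proof. by case: alpha_old => g ->; apply: ga_arc. Qed.
Lemma beta_arc : is_arc D beta.
Proof. exact: ga_arc. Qed.

Lemma s'E i : s' i = if i == i1 then insq (s1 i1) q A else s1 i.
Proof. exact: nth_ins Hi1'. Qed.

Lemma Fc i j : i < size D -> j < size (s i) ->
  let J := gpos i1 q A i (gpos i2 p2 B i j) in
  [/\ J < size (s' i), nth (0, true) (s' i) J = nth (0, true) (s i) j,
      rho A alpha (ga (s' i) i J) (ga (s i) i j) &
      rho A alpha (ga (s' i) i J.+1) (ga (s i) i j.+1)].
Proof.
move=> Hi Hj /=.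
have [a1 a2 a3 a4] := gins_old B Hi2 Hp2 Hj.
rewrite -/Dmid in a1 a2 a3 a4.
have [b1 b2 b3 b4] := gins_old A Hi1' Hq a1.
rewrite -/Dfin -/alpha in b1 b2 b3 b4.
rewrite (rhoB B_over a3) in b3; rewrite (rhoB B_over a4) in b4.
by split => //; rewrite b2.
Qed.

Lemma contig k : k < n -> gpos i1 q A i2 (p2 + k) = PB + k.
Proof.
move=> Hk; rewrite /PB /gpos /pos size_A.
case: (eqVneq i2 i1) => [E|//]; subst; move: Hct; rewrite eqxx /=.
by case: ifP; case: ifP; lia.
Qed.

Lemma Fd i J : i < size D -> J < size (s' i) ->
  (exists j, [/\ j < size (s i), nth (0, true) (s' i) J = nth (0, true) (s i) j,
      rho A alpha (ga (s' i) i J) (ga (s i) i j) &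
      rho A alpha (ga (s' i) i J.+1) (ga (s i) i j.+1)]) \/
  (i = i1 /\ exists2 m, m < n & J = q + m) \/ (i = i2 /\ exists2 k, k < n & J = PB + k).
Proof.
move=> Hi HJ.
case: (gins_cover Hi1' Hq HJ) => [[J1 HJ1 EJ]|[Ei [k Hk EJ]]]; last first.
  by right; left; split => //; exists k => //; rewrite -size_A.
case: (gins_cover Hi2 Hp2 HJ1) => [[j Hj EJ1]|[Ei [k Hk EJ1]]].
  left; exists j; have := Fc Hi Hj; rewrite /= -EJ1 -EJ; by case.
right; right; split => //; exists k; first by rewrite -size_B.
by rewrite EJ EJ1 Ei contig // -size_B.
Qed.

Lemma Fb k : k < n ->
  [/\ PB + k < size (s' i2), nth (0, true) (s' i2) (PB + k) = nth (0, true) B k &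
      ga (s' i2) i2 (PB + k).+1 = y'].
Proof.
have G : forall k, k < n -> PB + k < size (s' i2) /\
    nth (0, true) (s' i2) (PB + k) = nth (0, true) B k.
  move=> k0 Hk0; have HkB : k0 < size B by rewrite size_B.
  have [h1 h2] := gins_new (0, true) Hi2 Hp2 HkB.
  rewrite -/Dmid in h1 h2.
  have [b1 b2 _ _] := gins_old A Hi1' Hq h1.
  by rewrite -/Dfin contig // in b1 b2; rewrite b2 h2.
move=> Hk; have [g1 g2] := G k Hk; split => //.
have Hrun := @ga_overs_run (s' i2) i2 PB n.
have Hsz : PB + n <= size (s' i2).
  have [g3 _] := G n.-1 (ltac:(lia)); lia.
have Hov : forall k0, k0 < n -> (nth (0, true) (s' i2) (PB + k0)).2.
  by move=> k0 Hk0; have [_ ->] := G k0 Hk0; exact: nth_B_over.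
by rewrite -addnS (Hrun Hsz Hov k.+1 Hk).
Qed.

Lemma y_rho : rho A alpha y' beta.
Proof.
have Hp2' : p2 < size (s1 i2) by rewrite size_s1; lia.
have [_ b2 _ b4] := gins_old A Hi1' Hq Hp2'.
rewrite -/Dfin -/alpha in b2 b4.
have [_ _ Hy] := Fb Hn0; rewrite addn0 in Hy.
rewrite /gpos -/(gpos i1 q A i2 p2) -/PB Hy in b4.
have [_ h2] := gins_new (0, true) Hi2 Hp2 (ltac:(rewrite size_B; lia) : 0 < size B).
rewrite -/Dmid addn0 in h2.
rewrite ga_step // h2 nth_B_over in b4.
rewrite /beta; move: b4; rewrite s1E eqxx.
by have := GL B i2 (leqnn p2) Hp2 => /(rhoB B_over) ->.
Qed.

Lemma NotInr i g : i < size D -> ga (s' i) i g <> inr i1.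
Proof.
move=> Hi E; have [Ei Hall] := ga_inr E; subst i.
have [h1 h2 _ _] := Fa Hn0.
by have := all_nthP (0, true) Hall _ h1; rewrite h2.
Qed.

Lemma head_cls : head' = alpha \/ (head' = inl tl /\ alpha = inr i1).
Proof.
rewrite /head' s'E eqxx /alpha.
case: (GHead A i1 Hq) => [->|[c [Hc [-> ->]]]]; first by left.
by right; move: Hc; rewrite fu_A => -[->].
Qed.

Definition hp (g : gen) : word :=
  match g with
  | inl c => if c \in L then (if odd (index c L) then [:: (alpha, false)]
             else [:: (beta, false); (alpha, true); (beta, false)]) else [:: (g, false)]
  | inr _ => [:: (g, false)]
  end.
Arguments hp : simpl never.
Definition hh (g : gen) : word := [:: (if g == alpha then head' else g, false)].

Lemma hp_old g : is_arc D g -> hp g = [:: (g, false)].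
Proof.
case: g => [c|i] H; rewrite /hp /= // mem_L.
by have := arc_notnew (H : is_arc D (inl c)) => /negbTE ->.
Qed.

Lemma hp_L m : m < n -> hp (inl (nth 0 L m)) =
  if odd m then [:: (alpha, false)] else [:: (beta, false); (alpha, true); (beta, false)].
Proof.
move=> Hm; rewrite /hp mem_nth ?size_L // index_uniq ?size_L //; exact: uniq_L.
Qed.

Lemma hp_tl : hp (inl tl) = [:: (alpha, false)].
Proof.
rewrite /tl hp_L; last lia.
have : odd n.-1.+1 = odd n by rewrite prednK.
by move: Hev; rewrite /= => /negbTE -> /negbFE ->.
Qed.

Lemma hp_rho l' l : is_arc D l -> rho A alpha l' l -> hp l' = [:: (l, false)].
Proof.
move=> Hl [->|[c [Hc [-> ->]]]]; first exact: hp_old.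
by move: Hc; rewrite fu_A => -[<-]; exact: hp_tl.
Qed.

Lemma hp_head : hp head' = [:: (alpha, false)].
Proof. by case: head_cls => [->|[-> _]]; [exact: hp_old alpha_arc | exact: hp_tl]. Qed.

Lemma ga_allover (t : seq event) i g : all (fun e : event => e.2) t -> ga t i g = inr i.
Proof.
move=> H; rewrite /ga fuNo //.
by rewrite all_cat !all_rev -all_cat cat_take_drop.
Qed.

Lemma Rm m : m < n ->
  is_relator Dfin [:: (y', false); (xm m, true); (y', false); (xm m.+1, true)].
Proof.
move=> Hm; have [a1 a2 a3 a4] := Fa Hm.
have HcL : nth 0 L m \in cs by rewrite -mem_L mem_nth ?size_L.
have [k Hk HB] := B_cs HcL.
have [b1 b2 b3] := Fb Hk.
apply/relatorP; exists i1, (q + m), i2, (PB + k), (nth 0 L m); split.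
  split => //; first by rewrite size_D'.
    by split => //; rewrite size_D'.
  by rewrite b2 HB.
by rewrite /crel b3 a3.
Qed.

Notation R' := (is_relator Dfin).

Lemma chain m : m <= n ->
  wequiv R' [:: (xm m, false)]
    (if odd m then [:: (y', false); (head', true); (y', false)] else [:: (head', false)]).
Proof.
elim: m => [|m IH] Hm; first exact: we_refl.
have H1 : wequiv R' [:: (xm m.+1, false)] [:: (y', false); (xm m, true); (y', false)].
  apply: fg_solve; exact: we_rel0 (Rm Hm).
have {IH} IH := IH (ltnW Hm).
rewrite /=; case: (odd m) IH => IH /=.
  apply: (we_trans H1).
  have -> : [:: (y', false); (xm m, true); (y', false)] =
    [:: (y', false)] ++ winv [:: (xm m, false)] ++ [:: (y', false)] by [].
  apply: we_trans (fg3 R' y' head').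
  have -> : [:: (y', false); (y', true); (head', false); (y', true); (y', false)] =
    [:: (y', false)] ++ winv [:: (y', false); (head', true); (y', false)] ++ [:: (y', false)] by [].
  apply: we_cat; first exact: we_refl.
  by apply: we_cat; [apply: we_inv | exact: we_refl].
apply: (we_trans H1); apply: we3 => //; exact: we_refl.
Qed.

Lemma tail_head : wequiv R' [:: (inl tl, false)] [:: (head', false)].
Proof.
have := chain (leqnn n); rewrite (negbTE Hev).
by have -> : xm n = inl tl by rewrite /tl; case: (size cs) Hn0.
Qed.

Lemma letter1 l l' : rho A alpha l' l -> l' <> inr i1 ->
  wequiv R' (hh l) [:: (l', false)].
Proof.
rewrite /hh => [[->|[c [Hc [-> ->]]]]] Hne.
  case: ifP => [/eqP E|_]; last exact: we_refl.
  case: head_cls => [->|[_ Ea]]; first by rewrite E; exact: we_refl.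
  by move: Hne; rewrite E Ea.
move: Hc; rewrite fu_A => -[<-]; case: ifP => [_|/eqP //].
exact: we_sym tail_head.
Qed.

Lemma O1 g : is_arc D g -> over_gens (is_arc Dfin) (hh g).
Proof.
move=> Hg; rewrite /hh /over_gens /= andbT.
case: ifP => [_|/eqP Ne]; first by rewrite /head'; apply: ga_arc; rewrite size_D'.
case: g Hg Ne => [c|i] Hg Ne.
- rewrite /= in Hg *; case: (mem_flat Hg) => i [j [Hi Hj Hn]].
  have [a1 a2 _ _] := Fc Hi Hj.
  by rewrite -Hn -a2; apply: flat_mem => //; rewrite size_D'.
- move: Hg => /= /andP [Hi Hall]; rewrite size_D' Hi /=.
  apply/(all_nthP (0, true)) => J HJ.
  case: (Fd Hi HJ) => [[j [j1 j2 _ _]]|[[Ei [m Hm EJ]]|[Ei [k Hk EJ]]]].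
  + by rewrite j2; exact: (all_nthP (0, true) Hall).
  + exfalso; apply: Ne; subst i; case: alpha_old => g0 ->.
    by rewrite ga_allover.
  + by subst i J; have [_ -> _] := Fb Hk; exact: nth_B_over.
Qed.

Lemma O2 g : is_arc Dfin g -> over_gens (is_arc D) (hp g).
Proof.
case: g => [c|i] Hg.
- rewrite /hp; case: ifP => HcL.
    by case: ifP => _; rewrite /over_gens /= alpha_arc ?beta_arc.
  rewrite /over_gens /= andbT; rewrite /= in Hg.
  case: (mem_flat Hg) => i [J [Hi HJ Hn]]; rewrite size_D' in Hi.
  case: (Fd Hi HJ) => [[j [j1 j2 _ _]]|[[Ei [m Hm EJ]]|[Ei [k Hk EJ]]]].
  + by rewrite -Hn j2; apply: flat_mem.
  + subst i J; have [_ h2 _ _] := Fa Hm; move: Hn; rewrite h2 => -[Ec].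
    by rewrite -Ec mem_nth ?size_L in HcL.
  + subst i J; have [_ h2 _] := Fb Hk; move: Hn; rewrite h2 => E.
    by have := nth_B_over k; rewrite E.
- rewrite /over_gens /= andbT; move: Hg => /= /andP [Hi Hall]; rewrite size_D' in Hi.
  rewrite Hi /=; apply/(all_nthP (0, true)) => j Hj.
  have [a1 a2 _ _] := Fc Hi Hj.
  by rewrite -a2; exact: (all_nthP (0, true) Hall).
Qed.

Lemma O3 r : is_relator D r -> wequiv R' (subst hh r) [::].
Proof.
case/relatorP => i [j [i' [j' [c [[Hi Hj Hn [Hi' Hj'] Hn'] ->]]]]].
have [a1 a2 a3 a4] := Fc Hi Hj; have [b1 b2 b3 b4] := Fc Hi' Hj'.
have Hr' : R' (crel Dfin i (gpos i1 q A i (gpos i2 p2 B i j)) i'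
                       (gpos i1 q A i' (gpos i2 p2 B i' j')) c).
  apply/relatorP; do 5 eexists; split; last reflexivity.
  split; rewrite ?size_D' ?a2 ?b2 //.
apply: we_trans (we_rel0 Hr').
rewrite /crel /subst /= /lw /=.
apply: we4; apply: letter1.
- exact: b4.
- exact: NotInr.
- exact: a3.
- exact: NotInr.
- by left.
- by [].
Qed.

Lemma O5 g : is_arc D g -> wequiv (is_relator D) (subst hp (hh g)) [:: (g, false)].
Proof.
move=> Hg; rewrite /hh /subst /= /lw /= cats0.
case: ifP => [/eqP ->|_]; first by rewrite hp_head; exact: we_refl.
by rewrite hp_old //; exact: we_refl.
Qed.

Lemma not_arc_i1 : ~~ is_arc Dfin (inr i1).
Proof.
rewrite /= negb_and; apply/orP; right; apply/negP => Hall.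
have [h1 h2 _ _] := Fa Hn0.
by have := all_nthP (0, true) Hall _ h1; rewrite h2.
Qed.

Lemma hh_arc g : is_arc Dfin g -> wequiv R' (hh g) [:: (g, false)].
Proof.
move=> Hg; rewrite /hh; case: ifP => [/eqP E|_]; last exact: we_refl.
case: head_cls => [->|[_ Ea]]; first by rewrite E; exact: we_refl.
by move: Hg; rewrite E Ea (negbTE not_arc_i1).
Qed.

Lemma O6 g : is_arc Dfin g -> wequiv R' (subst hh (hp g)) [:: (g, false)].
Proof.
move=> Hg.
have Gen : hp g = [:: (g, false)] -> wequiv R' (subst hh (hp g)) [:: (g, false)].
  by move=> ->; rewrite /subst /= /lw /=; exact: hh_arc.
case: g Hg Gen => [c|i] Hg Gen; last exact: Gen.
case HcL: (c \in L); last by apply: Gen; rewrite /hp HcL.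
set m := index c L.
have Hm : m < n by rewrite -size_L index_mem.
have Ec : nth 0 L m = c := nth_index 0 HcL.
have Ch := chain Hm; rewrite /= Ec in Ch.
rewrite /hp HcL -/m; case: ifP => Ho; rewrite Ho /= in Ch.
  rewrite /subst /= /lw /hh /=; case: ifP => [_|/eqP //].
  exact: we_sym Ch.
apply: we_trans (we_sym Ch).
rewrite /subst /= /lw /=.
apply: we3; first by apply: (letter1 y_rho); exact: NotInr.
rewrite /hh; case: ifP => [_|/eqP //]; exact: we_refl.
Qed.

Lemma O4 r : R' r -> wequiv (is_relator D) (subst hp r) [::].
Proof.
case/relatorP => i [J [i' [J' [c [[Hi HJ Hn [Hi' HJ'] Hn'] ->]]]]].
rewrite size_D' in Hi Hi'.
case: (Fd Hi HJ) => [[j [j1 j2 j3 j4]]|[[Ei [m Hm EJ]]|[Ei [k Hk EJ]]]].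
- have Hcf : (c, false) \in flatten D by rewrite -Hn j2 flat_mem.
  have Hc : c \notin cs by apply/negP => Hc; have := Hfr false Hc; rewrite Hcf.
  case: (Fd Hi' HJ') => [[j' [k1 k2 k3 k4]]|[[Ei' [m Hm EJ']]|[Ei' [k Hk EJ']]]].
  + have Hr : is_relator D (crel D i j i' j' c).
      apply/relatorP; do 5 eexists; split; last reflexivity.
      by split => //; rewrite -?j2 -?k2.
    apply: we_trans (we_rel0 Hr).
    rewrite /crel /subst /= /lw /=.
    rewrite (hp_rho (ga_arc _ Hi') k4) (hp_rho (ga_arc _ Hi) j3) hp_old //=.
    exact: we_refl.
  + subst i' J'; have [_ h2 _ _] := Fa Hm; by rewrite h2 in Hn'.
  + subst i' J'; have [_ h2 _] := Fb Hk; rewrite h2 in Hn'.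
    by rewrite (nth_B_cs Hk Hn') in Hc.
- subst i J; have [a1 a2 a3 a4] := Fa Hm; rewrite a2 in Hn; case: Hn => Ec.
  have HcL : c \in cs by rewrite -Ec -mem_L mem_nth ?size_L.
  case: (Fd Hi' HJ') => [[j' [k1 k2 k3 k4]]|[[Ei' [m' Hm' EJ']]|[Ei' [k Hk EJ']]]].
  + have Hct' : (c, true) \in flatten D by rewrite -Hn' k2 flat_mem.
    by have := Hfr true HcL; rewrite Hct'.
  + subst i' J'; have [_ h2 _ _] := Fa Hm'; by rewrite h2 in Hn'.
  + subst i' J'; have [b1 b2 b3] := Fb Hk.
    rewrite /crel a3 b3 -Ec /subst /= /lw /=.
    rewrite (hp_rho beta_arc y_rho) (hp_L Hm).
    destruct m as [|m].
      by rewrite hp_head /=; exact: fg1.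
    rewrite /= (hp_L (ltnW Hm)); case: (odd m) => /=; [exact: fg1 | exact: fg2].
- subst i J; have [_ h2 _] := Fb Hk; rewrite h2 in Hn.
  by have := nth_B_over k; rewrite Hn.
Qed.

Lemma main_iso : pres_iso (is_arc D) (is_relator D) (is_arc Dfin) (is_relator Dfin).
Proof.
apply: (@pres_iso_subst _ _ _ _ hh hp).
- exact: O1.
- exact: O2.
- exact: O3.
- exact: O4.
- exact: O5.
- exact: O6.
Qed.
End Main.

Lemma q_bound D cs rb i1 i2 p2 q : i1 < size D -> i2 < size D ->
  p2 <= size (nth [::] D i2) ->
  q <= size (nth [::] D i1) + (if i1 == i2 then size cs else 0) ->
  q <= size (nth [::] (Dmid D cs rb i2 p2) i1).
Proof.
move=> H1 H2 Hp Hq; rewrite /Dmid nth_ins //.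
case: (eqVneq i1 i2) Hq => [E|Ne] Hq.
  by subst i1; rewrite size_insq // size_B.
by rewrite addn0 in Hq.
Qed.

Lemma insert_iso n D D' : 0 < n -> ~~ odd n -> vn_insert n D D' ->
  pres_iso (is_arc D) (is_relator D) (is_arc D') (is_relator D').
Proof.
move=> Hn Hev.
case=> cs [ra [rb [i1 [p1 [i2 [p2 [[Hsz Hu] Hfr [Hi1 Hp1] [Hi2 Hp2] HD']]]]]]].
subst n.
change (D' = ins2 D i1 p1 (A cs ra) i2 p2 (B cs rb) \/
        D' = ins2 D i2 p2 (B cs rb) i1 p1 (A cs ra)) in HD'.
have Main := fun q Hq Hct => @main_iso D cs ra rb i1 i2 p2 q Hn Hev Hu Hfr Hi1 Hi2 Hp2 Hq Hct.
have Comm : (i1 != i2) || (p2 <= p1) ->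
    ins (ins D i1 p1 (A cs ra)) i2 p2 (B cs rb) =
    Dfin D cs ra rb i1 i2 p2 (if i1 == i2 then p1 + size cs else p1).
  move=> Hc; rewrite ins_comm // size_B //.
have QB : (if i1 == i2 then p1 + size cs else p1) <= size (nth [::] (Dmid D cs rb i2 p2) i1).
  apply: q_bound => //; case: eqP => _; lia.
have QB' : p1 <= size (nth [::] (Dmid D cs rb i2 p2) i1).
  apply: q_bound => //; case: eqP => _; lia.
case: HD' => ->; rewrite /ins2.
- case: ifP => [/andP [/eqP E Hlt]|Hne].
    rewrite Comm; last by apply/orP; right; lia.
    apply: Main => //; move: Hlt; rewrite E; case: eqP => [_ Hlt|//] /=.
    apply/orP; right; lia.
  apply: (Main p1 QB'); move/negbT: Hne; rewrite negb_and -leqNgt.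
  by case/orP => ->; rewrite ?orbT.
- case: ifP => [/andP [/eqP E Hlt]|Hne].
    apply: (Main p1 QB'); apply/orP; right; apply/orP; left; lia.
  have Hc : (i1 != i2) || (p2 <= p1).
    by move/negbT: Hne; rewrite negb_and -leqNgt eq_sym.
  rewrite Comm //; apply: Main => //.
  move: Hc; case: eqP => [_ Hc|_ _] /=; last by [].
  apply/orP; right; lia.
Qed.

Theorem proposition6p2 (n : nat) (D D' : gcode) :
  0 < n -> ~~ odd n -> wf_gcode D -> wf_gcode D' -> vn_move n D D' ->
  pres_iso (is_arc D) (is_relator D) (is_arc D') (is_relator D').
Proof.
move=> Hn Hev _ _ [H|H]; first exact: insert_iso H.
by apply: pres_iso_sym; exact: insert_iso H.
Qed.
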